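(* Let $H$ be an atomic hypergraph and suppose the rank $r=|\bigcup H|-n$ of $\mathcal A(H)$ (with $n$ the connectedness number of $H$) satisfies $r>0$. Then every vertex of $\mathcal A(H)$ is contained in exactly $r$ facets of $\mathcal A(H)$ (i.e. is $\le$-comparable with exactly $r$ faces of rank $r-1$).
   Context: A hypergraph is a finite set $H$ of nonempty subsets of some finite set; its carrier is $\bigcup H$. For a family $F$ and set $Y$, $F_Y=\{X\in F\mid X\subseteq Y\}$. A hypergraph partition of $H$ is a partition $\{H_1,\dots,H_n\}$ ($n\ge0$) of the set $H$ with $\{\bigcup H_1,\dots,\bigcup H_n\}$ a partition of $\bigcup H$; $H$ is connected if it has exactly one hypergraph partition; the finest hypergraph partition is the unique one whose blocks are connected; its blocks are the connected components, the sets $\bigcup H_i$ are the connected components of the carrier, and their number $n$ is the connectedness number. $H$ is atomic if $\{x\}\in H$ for all $x\in\bigcup H$. Constructions of an atomic $H$, by induction on $|\bigcup H|$: (0) $\emptyset$ is the only construction of $\emptyset$; (1) if $|\bigcup H|\ge1$, $H$ connected, $x\in\bigcup H$, $K$ a construction of $H_{\bigcup H\setminus\{x\}}$, then $K\cup\{\bigcup H\}$ is a construction of $H$; (2) if $H$ is not connected with finest hypergraph partition $\{H_1,\dots,H_n\}$, $n\ge2$, and $K_i$ is a construction of $H_i$, then $K_1\cup\dots\cup K_n$ is a construction of $H$. A construct of $H$ is a subset of some construction of $H$ that contains every connected component of the carrier $\bigcup H$. $H$ is saturated if $X_1,X_2\in H$, $X_1\cap X_2\ne\emptyset$ imply $X_1\cup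 X_2\in H$; the saturated closure $\bar H$ is the saturated hypergraph obtained by adding to $H$ all sets equivalent under the following: $Y\subseteq \bigcup H$ is dispensable in $H$ if $H_Y\setminus\{Y\}$ is connected with carrier $Y$, and $\bar H$ is the largest hypergraph obtainable from $H$ by repeatedly adding dispensable sets. The poset $\mathcal A(H)$ has as elements all constructs of $H$ together with $\bar H^*=\bar H\cup\{*\}$ for a new element $*\notin\bigcup H$, ordered by $C_1\le C_2$ iff $C_2\subseteq C_1$. Its rank is $r=|\bigcup H|-n$; for $0\le k\le r$, the faces of rank $k$ are the constructs of cardinality $|\bigcup H|-k$, and $\bar H^*$ is the unique face of rank $-1$. Vertices are faces of rank $0$ (these are exactly the constructions), facets are faces of rank $r-1$. *)

(* Defs.v *)
From mathcomp Require Import all_boot.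
Set Implicit Arguments. Unset Strict Implicit. Unset Printing Implicit Defensive.

Section Hyper.
Variable T : finType.
Implicit Types (H B K C : {set {set T}}) (P : {set {set {set T}}}) (Y : {set T}).

Definition hypergraph H : bool := set0 \notin H.

Definition carrier H : {set T} := cover H.

Definition restrict H Y : {set {set T}} := [set X in H | X \subset Y].

(* hypergraph partition: a partition of the set H whose block carriers
   form a partition of the carrier (distinct blocks have disjoint carriers;
   blocks are nonempty, hence so are their carriers) *)
Definition hpartition H P : bool :=
  partition P H &&
  [forall B1 in P, forall B2 in P,
     (B1 != B2) ==> [disjoint carrier B1 & carrier B2]].

Definition connected H : bool := #|[set P | hpartition H P]| == 1.

(* finest hypergraph partition: a hypergraph partition with connected blocks
   (unique by the paper) *)
Definition finest_hpartition H P : bool :=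
  hpartition H P && [forall B in P, connected B].

Definition finest_part H : {set {set {set T}}} :=
  odflt set0 [pick P | finest_hpartition H P].

Definition carrier_components H : {set {set T}} :=
  [set carrier B | B in finest_part H].

Definition conn_number H : nat := #|finest_part H|.

Definition atomic H : bool := [forall x in carrier H, [set x] \in H].

Inductive construction : {set {set T}} -> {set {set T}} -> Prop :=
| constr_empty : construction set0 set0
| constr_conn : forall H (x : T) K,
    0 < #|carrier H| -> connected H -> x \in carrier H ->
    construction (restrict H (carrier H :\ x)) K ->
    construction H (K :|: [set carrier H])
| constr_disc : forall H P (Ks : {set {set T}} -> {set {set T}}),
    ~~ connected H -> finest_hpartition H P -> 2 <= #|P| ->
    (forall B, B \in P -> construction B (Ks B)) ->
    construction H (\bigcup_(B in P) Ks B).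

Definition construct H C : Prop :=
  (exists2 K, construction H K & C \subset K) /\
  carrier_components H \subset C.

Definition rankA H : nat := #|carrier H| - conn_number H.

Definition face_of_rank H k C : Prop :=
  k <= rankA H /\ construct H C /\ #|C| = #|carrier H| - k.

Definition vertex H C : Prop := face_of_rank H 0 C.
Definition facet H C : Prop := face_of_rank H (rankA H).-1 C.

(* the order of A(H): C1 <= C2 iff C2 \subset C1; comparability *)
Definition comparableA C1 C2 : bool := (C2 \subset C1) || (C1 \subset C2).

End Hyper.

(* Main.v *)
From Stdlib Require Import Lia.
Require Import Defs.
From mathcomp Require Import all_boot.


Lemma card_components (T : finType) (H : {set {set T}}) :
  hypergraph H -> #|carrier_components H| = conn_number H.
Proof.
move=> hH; rewrite /carrier_components /conn_number /finest_part.
case: pickP => [P /andP [/andP [/and3P [/eqP cP tP n0P] dP] _] | _] /=; last first.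
  by rewrite cards0; apply/eqP; rewrite cards_eq0 imset_eq0.
apply: card_in_imset => B1 B2 B1P B2P eqc.
apply/eqP; apply/negPn/negP => neB.
have := forallP dP B1; rewrite B1P /= => /forallP /(_ B2); rewrite B2P neB /= => dis.
have : B1 != set0 by apply: contraNneq n0P => <-.
case/set0Pn => X XB1.
have XH : X \in H by rewrite -cP; apply/bigcupP; exists B1.
have : X != set0 by apply: contraNneq hH => <-.
case/set0Pn => x xX.
have xc : x \in carrier B1 by apply/bigcupP; exists X.
by move: (disjointFr dis xc); rewrite -eqc xc.
Qed.

Theorem proposition5p2 (T : finType) (H : {set {set T}}) :
  hypergraph H -> atomic H -> 0 < rankA H ->
  forall V : {set {set T}}, vertex H V ->
  exists S : {set {set {set T}}},
    #|S| = rankA H /\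
    (forall F : {set {set T}}, F \in S <-> (facet H F /\ comparableA V F)).
Proof.
move=> hH _ r0 V; rewrite /vertex /face_of_rank /construct => -[_ [[[K cK VK] cV] cardV]].
have cc := @card_components T H hH.
set c := carrier_components H in cV cc.
have rE : rankA H = #|carrier H| - conn_number H by [].
have cVc : #|V :\: c| = rankA H.
  by rewrite cardsD (setIidPr cV) cardV cc subn0.
exists [set c :|: [set X] | X in V :\: c]; split.
  rewrite card_in_imset // => X Y /setDP [_ Xc] _ e.
  have : X \in c :|: [set Y] by rewrite -e in_setU set11 orbT.
  by rewrite in_setU (negbTE Xc) /= => /set1P.
move=> F; split.
  case/imsetP => X /setDP [XV Xc] ->.
  have sub : c :|: [set X] \subset V by rewrite subUset cV sub1set XV.
  split; last by rewrite /comparableA sub.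
  split; first by rewrite leq_pred.
  split; first by split; [exists K => //; apply: subset_trans VK | apply: subsetUl].
  rewrite setUC cardsU1 Xc cc /=.
  move: r0; rewrite rE; move: (conn_number H) (#|carrier H|) => a b.
  move=> /ltP; rewrite -!minusE => h; rewrite add1n -subn1 -!minusE; lia.
case=> [[_ [[[K' _ _] cF] cardF]] cmp].
have FV : F \subset V.
  case/orP: cmp => // VF.
  have : #|V| <= #|F| by apply: subset_leq_card.
  rewrite cardV cardF subn0 => le.
  have eqVF : V == F.
    rewrite eqEcard VF cardF cardV subn0 /=.
    move: le r0; rewrite rE; move: (conn_number H) (#|carrier H|) => a b.
    move=> /leP h1 /ltP; rewrite -!minusE => h2; apply/leP; rewrite -subn1 -!minusE in h1 *; lia.
  by rewrite -(eqP eqVF).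
have : #|F :\: c| == 1.
  rewrite cardsD (setIidPr cF) cardF cc.
  move: r0; rewrite rE; move: (conn_number H) (#|carrier H|) => a b.
  move=> /ltP; rewrite -!minusE => h; apply/eqP; rewrite -subn1 -!minusE; lia.
case/cards1P => X FX.
have XF : X \in F :\: c by rewrite FX set11.
apply/imsetP; exists X.
  by case/setDP: XF => XF Xc; rewrite in_setD Xc (subsetP FV).
rewrite -FX; apply/setP => Y; rewrite !inE; case Yc: (Y \in c) => /=; last by [].
by rewrite (subsetP cF).
Qed.
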